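(* Let $G$ be a (nonempty) subgraph of $Q_n$ with average degree $d$. For each vertex $v$ of $G$, let $|L_G(v)|$ denote the maximum length of an increasing geodesic in $G$ ending at $v$. Then $$\sum_{v\in V(G)} |L_G(v)| \ge d\,|V(G)|.$$
   Context: The hypercube $Q_n$ has vertex set $\{0,1\}^n$, two vertices adjacent iff they differ in exactly one coordinate; the direction of an edge is that coordinate in $\{1,\dots,n\}$. A path $P=x_1x_2\ldots x_l$ in $Q_n$ is an increasing geodesic if the directions of the edges $x_ix_{i+1}$ strictly increase with $i$; it ends at $x_l$. The single-vertex path $x_1$ is an increasing geodesic of length $0$ ending at $x_1$. Length means number of edges. The average degree of $G$ is $2|E(G)|/|V(G)|$. *)

(* Defs.v *)
From mathcomp Require Import all_boot all_order all_algebra.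
Set Implicit Arguments. Unset Strict Implicit. Unset Printing Implicit Defensive.

(* Vertices of Q_n: functions 'I_n -> bool (coordinate i+1 of the paper is index i). *)
Definition cube (n : nat) := {ffun 'I_n -> bool}.

Definition flip n (x : cube n) (i : 'I_n) : cube n :=
  [ffun j => if j == i then ~~ x j else x j].

Definition subgraph_of_cube n (V : {set cube n}) (E : {set {set cube n}}) : Prop :=
  forall e, e \in E ->
    exists x : cube n, exists i : 'I_n,
      [/\ e = [set x; flip x i], x \in V & flip x i \in V].

(* The increasing geodesic starting at x with direction sequence ds visits
   x, flip x ds_1, flip (flip x ds_1) ds_2, ... *)
Definition incr_geod n (V : {set cube n}) (E : {set {set cube n}})
    (x : cube n) (ds : seq 'I_n) : bool :=
  [&& x \in V,
      sorted ltn (map val ds) &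
      path (fun u w => [set u; w] \in E) x (scanl (@flip n) x ds)].

Definition geod_end n (x : cube n) (ds : seq 'I_n) : cube n :=
  last x (scanl (@flip n) x ds).

(* There is an increasing geodesic in G of length k (= number of edges) ending at v. *)
Definition has_geod_len n V E (v : cube n) (k : nat) : bool :=
  [exists x : cube n, exists ds : k.-tuple 'I_n,
     incr_geod V E x ds && (geod_end x ds == v)].

(* |L_G(v)| : maximum length of an increasing geodesic in G ending at v
   (lengths are at most n since directions strictly increase in 'I_n). *)
Definition Lmax n V E (v : cube n) : nat :=
  \max_(k < n.+1 | has_geod_len V E v k) k.

Definition avg_degree n (V : {set cube n}) (E : {set {set cube n}}) : rat :=
  (2 * #|E|)%:R / #|V|%:R.

(* Main.v *)
Require Import Defs.
From mathcomp Require Import all_boot all_order all_algebra.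
From mathcomp Require Import zify.
Set Implicit Arguments. Unset Strict Implicit. Unset Printing Implicit Defensive.

Section Aux.
Variable n : nat.
Implicit Types (V : {set cube n}) (E : {set {set cube n}}).

Lemma last_scanl (T1 T2 : Type) (g : T1 -> T2 -> T1) x s :
  last x (scanl g x s) = foldl g x s.
Proof. by elim: s x => //= a s IH x; rewrite IH. Qed.

Lemma flipK (i : 'I_n) : involutive (fun x => @flip n x i).
Proof.
move=> x; apply/ffunP=> j; rewrite !ffunE; by case: (j == i); rewrite ?negbK.
Qed.

Lemma flip_inj (i : 'I_n) : injective (fun x => @flip n x i).
Proof. exact: inv_inj (flipK i). Qed.

Lemma flip_neq (x : cube n) i : flip x i != x.
Proof.
apply/eqP=> /ffunP /(_ i); rewrite ffunE eqxx; by case: (x i).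
Qed.

Lemma flip_eq (x : cube n) i j : flip x i = flip x j -> i = j.
Proof.
move=> /ffunP /(_ i); rewrite !ffunE eqxx.
by case: eqP => // _; case: (x i).
Qed.

Lemma edge_in V E u w : subgraph_of_cube V E -> [set u; w] \in E ->
  u \in V /\ w \in V.
Proof.
move=> H /H [x [i [e xV fV]]].
have: u \in [set u; w] by rewrite !inE eqxx.
have: w \in [set u; w] by rewrite !inE eqxx orbT.
rewrite e !inE => /orP [/eqP->|/eqP->] /orP [/eqP->|/eqP->] //.
Qed.

Lemma size_sorted_lt (s : seq nat) K : sorted ltn s -> all (fun d => d < K) s ->
  size s <= K.
Proof.
move=> so al.
have u : uniq s by apply: sorted_uniq so; [exact: ltn_trans | exact: ltnn].
rewrite -(size_iota 0 K); apply: uniq_leq_size => // d ds.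
by rewrite mem_iota /=; move/allP: al => /(_ d ds).
Qed.

Lemma sorted_rcons_lt (s : seq nat) K : sorted ltn s -> all (fun d => d < K) s ->
  sorted ltn (rcons s K).
Proof.
case: s => // d s so al; move/allP: al => /(_ _ (mem_last d s)) h.
rewrite /= rcons_path; rewrite /= in so; rewrite so /=; exact: h.
Qed.

Definition geodK V E (K : nat) (v : cube n) (k : nat) : bool :=
  [exists x : cube n, exists ds : k.-tuple 'I_n,
     [&& incr_geod V E x ds, geod_end x ds == v & all (fun d : 'I_n => d < K) ds]].

Definition LK V E K (v : cube n) : nat :=
  if v \in V then \max_(k < n.+1 | geodK V E K v k) k else 0.

Lemma LK_Lmax V E K v : LK V E K v <= Lmax V E v.
Proof.
rewrite /LK; case: ifP => // _.
apply/bigmax_leqP => k /existsP [x /existsP [ds /and3P [g e _]]].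
apply: (@leq_bigmax_cond _ (fun k : 'I_n.+1 => has_geod_len V E v k) (fun k => nat_of_ord k)).
by apply/existsP; exists x; apply/existsP; exists ds; rewrite g e.
Qed.

Lemma LK_mono V E K v : LK V E K v <= LK V E K.+1 v.
Proof.
rewrite /LK; case: ifP => // _.
apply/bigmax_leqP => k /existsP [x /existsP [ds /and3P [g e a]]].
apply: (@leq_bigmax_cond _ (fun k : 'I_n.+1 => geodK V E K.+1 v k) (fun k => nat_of_ord k)).
apply/existsP; exists x; apply/existsP; exists ds; rewrite g e /=.
by apply: sub_all a => d /ltnW.
Qed.

Lemma LK_ext V E (kK : 'I_n) u : subgraph_of_cube V E ->
  [set u; flip u kK] \in E ->
  (LK V E kK u).+1 <= LK V E kK.+1 (flip u kK).
Proof.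
move=> H uE; have [uV fV] := edge_in H uE.
rewrite /LK uV fV.
have g0 : geodK V E kK u (@ord0 n).
  apply/existsP; exists u; apply/existsP; exists [tuple].
  by rewrite /incr_geod /geod_end /= uV eqxx.
rewrite (@bigmax_eq_arg _ ord0 (fun k : 'I_n.+1 => geodK V E kK u k) (fun k => nat_of_ord k) g0).
case: arg_maxnP => // k /existsP [x /existsP [ds /and3P [g e a]]] _.
move: g => /and3P [xV so pa].
have sz : k < n.
  have := size_sorted_lt so (K := kK); rewrite size_map size_tuple all_map.
  by move=> /(_ a) h; apply: leq_trans (ltn_ord kK).
have szr : size (rcons ds kK) == k.+1 by rewrite size_rcons size_tuple.
have ge : geod_end x ds = u by apply/eqP.
apply: (@leq_bigmax_cond _ (fun k : 'I_n.+1 => geodK V E kK.+1 (flip u kK) k)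
   (fun k => nat_of_ord k) (Ordinal (sz : k.+1 < n.+1))).
apply/existsP; exists x; apply/existsP; exists (Tuple szr) => /=.
rewrite /incr_geod /geod_end /= xV scanl_rcons rcons_path pa /=.
rewrite last_scanl -/(geod_end x ds) -[foldl _ _ _]last_scanl.
rewrite map_rcons all_rcons ltnSn /= last_rcons foldl_rcons -last_scanl.
rewrite -/(geod_end x ds) ge uE eqxx /=.
rewrite andbT; apply/andP; split; last by apply: sub_all a => d /= /ltnW.
apply: sorted_rcons_lt so _; by rewrite all_map.
Qed.

Lemma flipK' (x : cube n) i : flip (flip x i) i = x.
Proof. exact: flipK. Qed.

Definition mm E (k : 'I_n) (v : cube n) : nat := [set v; flip v k] \in E.

Lemma pairLK V E (kK : 'I_n) v : subgraph_of_cube V E ->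
  LK V E kK v + LK V E kK (flip v kK) + (mm E kK v + mm E kK v) <=
  LK V E kK.+1 v + LK V E kK.+1 (flip v kK).
Proof.
move=> H; have m1 := LK_mono V E kK v; have m2 := LK_mono V E kK (flip v kK).
rewrite /mm; case hE: ([set v; flip v kK] \in E) => /=; first last. lia.
have e1 := LK_ext H hE.
have hE' : [set flip v kK; flip (flip v kK) kK] \in E by rewrite flipK' setUC.
have e2 := LK_ext H hE'; rewrite flipK' in e2.
lia.
Qed.

Lemma mainK V E K : subgraph_of_cube V E -> K <= n ->
  \sum_(v : cube n) \sum_(k : 'I_n | k < K) mm E k v <= \sum_(v : cube n) LK V E K v.
Proof.
move=> H; elim: K => [|K IH] Kn.
  by rewrite big1 // => v _; rewrite big1 // => k; rewrite ltn0.
have Kn' : K < n := Kn.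
pose kK := Ordinal Kn'.
have sp v : \sum_(k : 'I_n | k < K.+1) mm E k v = mm E kK v + \sum_(k : 'I_n | k < K) mm E k v.
  rewrite (bigD1 kK) //=; congr (_ + _); apply: eq_bigl => k.
  by rewrite ltnS ltn_neqAle -val_eqE andbC.
rewrite (eq_bigr _ (fun v _ => sp v)) big_split /=.
have S : \sum_(v : cube n) (LK V E kK v + LK V E kK (flip v kK) + (mm E kK v + mm E kK v)) <=
  \sum_(v : cube n) (LK V E kK.+1 v + LK V E kK.+1 (flip v kK)).
  by apply: leq_sum => v _; exact: pairLK.
rewrite /= !big_split /= in S.
have R1 : \sum_(v : cube n) LK V E K (flip v kK) = \sum_(v : cube n) LK V E K v.
  by rewrite [RHS](reindex_inj (@flip_inj kK)).
have R2 : \sum_(v : cube n) LK V E K.+1 (flip v kK) = \sum_(v : cube n) LK V E K.+1 v.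
  by rewrite [RHS](reindex_inj (@flip_inj kK)).
rewrite R1 R2 in S.
have := IH (ltnW Kn). change (nat_of_ord kK) with K in S.
set A := \sum_(v : cube n) LK V E K v in S *.
set B := \sum_(v : cube n) LK V E K.+1 v in S *.
set C := \sum_(v : cube n) mm E kK v in S *.
set D := \sum_(v : cube n) \sum_(k : 'I_n | k < K) mm E k v.
lia.
Qed.

Lemma sum_bool (T : finType) (P : pred T) : \sum_(i : T) (P i : nat) = #|[set i | P i]|.
Proof.
rewrite -sum1_card [RHS]big_mkcond; apply: eq_bigr => i _; rewrite inE; by case: (P i).
Qed.

Lemma hand V E : subgraph_of_cube V E ->
  2 * #|E| = \sum_(v : cube n) \sum_(k : 'I_n) mm E k v.
Proof.
move=> H.
have inj v : injective (fun k : 'I_n => [set v; flip v k]).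
  move=> k k' E0.
  have: flip v k \in [set v; flip v k'] by rewrite -E0 !inE eqxx orbT.
  rewrite !inE => /orP [/eqP h | /eqP h]; last exact: flip_eq h.
  by move: (flip_neq v k); rewrite h eqxx.
have deg v : \sum_(k : 'I_n) mm E k v = #|[set e | (e \in E) && (v \in e)]|.
  rewrite sum_bool.
  have -> : [set e | (e \in E) && (v \in e)] =
            [set [set v; flip v k] | k in [set k | [set v; flip v k] \in E]].
    apply/setP => e; rewrite !inE; apply/andP/imsetP.
      move=> [eE ve]; have [x [i [e0 xV fV]]] := H e eE.
      move: ve; rewrite e0 !inE => /orP [/eqP ->|/eqP ->].
        by exists i => //; rewrite inE -e0.
      exists i; first by rewrite inE flipK' setUC -e0.
      by rewrite flipK' setUC.
    move=> [k]; rewrite inE => kE ->; split => //; by rewrite !inE eqxx.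
  by rewrite card_imset.
rewrite (eq_bigr _ (fun v _ => deg v)).
have c2 : \sum_(e in E) #|e| = 2 * #|E|.
  rewrite -[2 * _]mulnC -sum_nat_const; apply: eq_bigr => e eE.
  have [x [i [-> _ _]]] := H e eE.
  by rewrite cards2 eq_sym flip_neq.
rewrite -c2.
have c3 (e : {set cube n}) : #|e| = \sum_(v : cube n) (v \in e : nat).
  rewrite sum_bool; have -> : [set v | v \in e] = e by apply/setP => v; rewrite inE.
  by [].
rewrite (eq_bigr _ (fun e _ => c3 e)) exchange_big /=.
apply: eq_bigr => v _; rewrite -sum_bool big_mkcond /=.
by apply: eq_bigr => e _; case: (e \in E).
Qed.

End Aux.

Local Open Scope ring_scope.
Import Order.TTheory GRing.Theory Num.Theory.

Theorem theorem4 (n : nat) (V : {set cube n}) (E : {set {set cube n}}) :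
  subgraph_of_cube V E -> V != set0 ->
  avg_degree V E * #|V|%:R <= \sum_(v in V) (Lmax V E v)%:R :> rat.
Proof.
move=> H V0; have cV : (0 < #|V|)%N by rewrite card_gt0.
rewrite /avg_degree divfK ?pnatr_eq0 -?lt0n // -natr_sum ler_nat.
rewrite (hand H).
have M := mainK H (leqnn n).
rewrite (eq_bigr (fun v => \sum_(k : 'I_n | (k < n)%N) mm E k v)); last first.
  by move=> v _; apply: eq_bigl => k; rewrite ltn_ord.
apply: leq_trans M _.
rewrite [X in (_ <= X)%N]big_mkcond /=; apply: leq_sum => v _.
case: (boolP (v \in V)) => vV; first exact: LK_Lmax.
by rewrite /LK (negbTE vV).
Qed.
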